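(* Consider the $nm$ iterations $(i,j)$, $1\le i\le n$, $1\le j\le m$, of the Triangular Basis Algorithm, each viewed as an atomic transformation of the full state (the $x_j$, $\mathrm{used}_j$, $av_i$, $b_i$). Equip the index set with the partial order $(i,j)\le(k,l)\iff i\le k \text{ and } j\le l$. Then for every total ordering of the iterations that extends this partial order (i.e. $(i,j)$ is executed before $(k,l)$ whenever $(i,j)<(k,l)$), executing the iterations in that order from the initial state produces the same final state as the standard lexicographic execution order. In particular, all iterations $(i,j)$ with a fixed value of $i+j$ may be executed in any order (in parallel).
   Context: All arithmetic is over $\mathbb{F}_2$ ($+$ is XOR, $\wedge$ is AND). For a vector $v\in\{0,1\}^n$, $v[i]$ is its $i$-th bit and $v[a..b]$ the substring of bits $a$ through $b$ (empty if $a>b$). Triangular Basis Algorithm. Input: $x_1,\dots,x_m\in\{0,1\}^n$ (modified in place). Auxiliary variables: bits $\mathrm{used}_j$ ($1\le j\le m$) initialized to $0$; bits $av_i$ ($1\le i\le n$) initialized to $1$; strings $b_i[(i+1)..n]$ ($1\le i\le n$) initialized to all zeros. The algorithm executes, for $i=1,\dots,n$ (outer loop) and, inside it, for $j=1,\dots,m$ (inner loop), the following four steps in order (iteration $(i,j)$): (1) $\mathrm{used}_j \leftarrow \mathrm{used}_j + (x_j[i]\wedge av_i)$; (2) $av_i\leftarrow av_i + (x_j[i]\wedge \mathrm{used}_j)$ (using the value of $\mathrm{used}_j$ just updated); (3) if $\mathrm{used}_j=1$: $b_i[(i+1)..n]\leftarrow b_i[(i+1)..n]+x_j[(i+1)..n]$;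 (4) if $x_j[i]=1$: $x_j[(i+1)..n]\leftarrow x_j[(i+1)..n]+b_i[(i+1)..n]$. *)

(* Defs.v *)
(* Indices are 0-based: row/bit index i : 'I_n (paper's i-1),
   vector index j : 'I_m (paper's j-1). Bits are bool, + is xor (addb), /\ is &&. *)
From mathcomp Require Import all_boot.
Set Implicit Arguments. Unset Strict Implicit. Unset Printing Implicit Defensive.

Record tb_state (n m : nat) := TBState {
  xs   : {ffun 'I_m -> {ffun 'I_n -> bool}};   (* xs j i = x_j[i] *)
  used : {ffun 'I_m -> bool};
  av   : {ffun 'I_n -> bool};
  bs   : {ffun 'I_n -> {ffun 'I_n -> bool}}     (* bs i k = b_i[k], meaningful for k > i *)
}.

Definition tb_init (n m : nat) (x : {ffun 'I_m -> {ffun 'I_n -> bool}}) : tb_state n m :=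
  TBState x [ffun _ => false] [ffun _ => true] [ffun _ => [ffun _ => false]].

Definition tb_step (n m : nat) (s : tb_state n m) (p : 'I_n * 'I_m) : tb_state n m :=
  let: (i, j) := p in
  let xji := xs s j i in
  let u' := used s j (+) (xji && av s i) in
  let used' := [ffun j' => if j' == j then u' else used s j'] in
  let a' := av s i (+) (xji && u') in
  let av' := [ffun i' => if i' == i then a' else av s i'] in
  let bi' := [ffun k : 'I_n => if (i < k) && u' then bs s i k (+) xs s j k else bs s i k] in
  let bs' := [ffun i' => if i' == i then bi' else bs s i'] in
  let xj' := [ffun k : 'I_n => if (i < k) && xji then xs s j k (+) bi' k else xs s j k] in
  let xs' := [ffun j' => if j' == j then xj' else xs s j'] in
  TBState xs' used' av' bs'.

Definition tb_run (n m : nat) (s0 : tb_state n m) (order : seq ('I_n * 'I_m)) : tb_state n m :=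
  foldl (@tb_step n m) s0 order.

Definition lex_order (n m : nat) : seq ('I_n * 'I_m) :=
  [seq (i, j) | i <- enum 'I_n, j <- enum 'I_m].

Definition idx_le (n m : nat) (p q : 'I_n * 'I_m) : bool :=
  (p.1 <= q.1) && (p.2 <= q.2).

Definition linear_extension (n m : nat) (order : seq ('I_n * 'I_m)) : Prop :=
  perm_eq order (lex_order n m) /\
  forall p q : 'I_n * 'I_m, idx_le p q -> p != q -> index p order < index q order.

(* Main.v *)
Require Import Defs.
From mathcomp Require Import all_boot.
From mathcomp Require Import zify.

Section Abs.
Variables (T : eqType) (S : Type) (f : S -> T -> S) (dep : rel T).
Hypothesis comm : forall a b, ~~ dep a b -> forall s, f (f s a) b = f (f s b) a.

Lemma fold_move a t1 t2 s0 : (forall b, b \in t1 -> ~~ dep a b) ->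
  foldl f s0 (t1 ++ a :: t2) = foldl f (f s0 a) (t1 ++ t2).
Proof.
elim: t1 s0 => [|b t1 IH] s0 H //=.
rewrite IH; last by move=> c Hc; apply: H; rewrite inE Hc orbT.
by rewrite -comm // H // inE eqxx.
Qed.

Lemma fold_reorder s t : uniq s -> perm_eq s t ->
  (forall b c, dep b c -> index b s < index c s -> index b t < index c t) ->
  forall s0, foldl f s0 s = foldl f s0 t.
Proof.
elim: s t => [|a s IH] t Us Pst Hord s0.
  by move/perm_size: Pst => /esym/size0nil ->.
have Ut : uniq t by rewrite -(perm_uniq Pst).
have at_ : a \in t by rewrite -(perm_mem Pst) inE eqxx.
case/splitPr: at_ Ut Pst Hord => t1 t2 Ut Pst Hord.
move: (Ut); rewrite cat_uniq /= => /and4P [U1 /norP [na1 _] _ U2].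
have ta1 : a \notin t1.
  by apply/negP => H; move: na1; rewrite /= ; move: Ut; rewrite cat_uniq => /and3P [_ /hasPn Hh _]; move: (Hh a); rewrite inE eqxx /= => /(_ isT); rewrite H.
rewrite fold_move; last first.
  move=> b Hb; apply/negP => Dab.
  have Hba : b != a by apply/eqP => E; move: ta1; rewrite -E Hb.
  have := Hord a b Dab; rewrite /= eqxx.
  have : b \in a :: s by rewrite (perm_mem Pst) mem_cat Hb.
  rewrite inE (negbTE Hba) /= => _.
  rewrite eq_sym (negbTE Hba) /= => /(_ isT).
  rewrite !index_cat Hb (negbTE ta1) /= eqxx.
  by have := index_mem b t1; rewrite Hb; lia.
have P' : perm_eq s (t1 ++ t2).
  by rewrite -(perm_cons a); apply: (perm_trans Pst); rewrite (perm_catCA t1 [:: a] t2).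
apply: IH => //.
- by case/andP: Us.
move=> b c Dbc.
case/andP: Us => as_ Us.
case: (eqVneq b a) => [->|Hba].
  by rewrite memNindex //; have := index_size c s; lia.
case: (eqVneq c a) => [->|Hca].
  rewrite (memNindex as_) index_mem => bs.
  rewrite (@memNindex _ a (t1 ++ t2)); last by rewrite mem_cat negb_or ta1 /=; move: Ut; rewrite cat_uniq /= => /and4P [_ _ ? _].
  by rewrite index_mem -(perm_mem P').
move=> Hlt; have := Hord b c Dbc.
rewrite /= eq_sym (negbTE Hba) eq_sym (negbTE Hca) ltnS => /(_ Hlt).
rewrite !index_cat /= eq_sym (negbTE Hba) eq_sym (negbTE Hca).
have := index_mem b t1; have := index_mem c t1.
case: (b \in t1); case: (c \in t1); lia.
Qed.
End Abs.
Lemma tb_comm n m (p q : 'I_n * 'I_m) (s : tb_state n m) :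
  p.1 != q.1 -> p.2 != q.2 ->
  tb_step (tb_step s p) q = tb_step (tb_step s q) p.
Proof.
case: p q => i j [k l] /= Hik Hjl.
rewrite /tb_step /=.
have Hki : k != i by rewrite eq_sym.
have Hlj : l != j by rewrite eq_sym.
Ltac simp Hik Hki Hjl Hlj := repeat progress rewrite ?ffunE ?eqxx ?(negbTE Hik) ?(negbTE Hki) ?(negbTE Hjl) ?(negbTE Hlj).
congr TBState; apply/ffunP => a; rewrite !ffunE.
- have [Ea|Na] := eqVneq a j; have [Eb|Nb] := eqVneq a l.
  + by subst; rewrite eqxx in Hjl.
  + subst a; simp Hik Hki Hjl Hlj; apply/ffunP => b; simp Hik Hki Hjl Hlj; done.
  + subst a; simp Hik Hki Hjl Hlj; apply/ffunP => b; simp Hik Hki Hjl Hlj; done.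
  + by rewrite ?(negbTE Na) ?(negbTE Nb).
- have [Ea|Na] := eqVneq a j; have [Eb|Nb] := eqVneq a l.
  + by subst; rewrite eqxx in Hjl.
  + by subst a; simp Hik Hki Hjl Hlj.
  + by subst a; simp Hik Hki Hjl Hlj.
  + by rewrite ?(negbTE Na) ?(negbTE Nb).
- have [Ea|Na] := eqVneq a i; have [Eb|Nb] := eqVneq a k.
  + by subst; rewrite eqxx in Hik.
  + by subst a; simp Hik Hki Hjl Hlj.
  + by subst a; simp Hik Hki Hjl Hlj.
  + by rewrite ?(negbTE Na) ?(negbTE Nb).
- have [Ea|Na] := eqVneq a i; have [Eb|Nb] := eqVneq a k.
  + by subst; rewrite eqxx in Hik.
  + subst a; simp Hik Hki Hjl Hlj; apply/ffunP => b; simp Hik Hki Hjl Hlj; done.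
  + subst a; simp Hik Hki Hjl Hlj; apply/ffunP => b; simp Hik Hki Hjl Hlj; done.
  + by rewrite ?(negbTE Na) ?(negbTE Nb).
Qed.
Lemma index_allpairs (A B : eqType) (sa : seq A) (sb : seq B) a b :
  a \in sa -> b \in sb ->
  index (a, b) [seq (x, y) | x <- sa, y <- sb] = index a sa * size sb + index b sb.
Proof.
move=> Ha Hb; elim: sa Ha => [|c sa IH] //= Ha.
rewrite index_cat; case: (eqVneq c a) => [->|Nca].
  rewrite (_ : (a, b) \in _ = true); last by apply/mapP; exists b.
  rewrite mul0n add0n.
  have inj : injective (pair a : B -> A * B) by move=> x y [].
  by rewrite index_map.
rewrite (_ : (a, b) \in _ = false); last first.
  by apply/negbTE/negP => /mapP [y _ [E _]]; rewrite E eqxx in Nca.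
move: Ha; rewrite inE eq_sym (negbTE Nca) /= => Ha.
by rewrite IH // size_map mulSn addnA.
Qed.

Lemma index_lex n m (i : 'I_n) (j : 'I_m) :
  index (i, j) (lex_order n m) = i * m + j.
Proof.
by rewrite /lex_order index_allpairs ?mem_enum // !index_enum_ord size_enum_ord.
Qed.

Lemma uniq_lex n m : uniq (lex_order n m).
Proof.
by apply: allpairs_uniq; rewrite ?enum_uniq // => -[a b] [c d] _ _ /= [-> ->].
Qed.

Theorem mainTheorem4 (n m : nat) (x : {ffun 'I_m -> {ffun 'I_n -> bool}})
    (order : seq ('I_n * 'I_m)) :
  linear_extension order ->
  tb_run (tb_init x) order = tb_run (tb_init x) (lex_order n m).
Proof.
move=> [Pord Hord]; rewrite /tb_run.
apply: (@fold_reorder _ _ (@tb_step n m) (fun p q => (p.1 == q.1) || (p.2 == q.2))).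
- by move=> a b; rewrite negb_or => /andP [H1 H2] s; apply: tb_comm.
- by rewrite (perm_uniq Pord) uniq_lex.
- exact: Pord.
move=> [i j] [k l] /= D Hlt.
have Nbc : (i, j) != (k, l) by apply/eqP => E; rewrite E ltnn in Hlt.
have Hle : idx_le (i, j) (k, l).
  rewrite /idx_le /=.
  case/orP: D => /eqP E; subst.
    rewrite leqnn /=; case: (leqP j l) => // Hlj.
    have := Hord (k, l) (k, j); rewrite /idx_le /= leqnn (ltnW Hlj) eq_sym => /(_ isT Nbc).
    by rewrite ltnNge (ltnW Hlt).
  rewrite leqnn andbT; case: (leqP i k) => // Hki.
  have := Hord (k, l) (i, l); rewrite /idx_le /= leqnn (ltnW Hki) eq_sym => /(_ isT Nbc).
  by rewrite ltnNge (ltnW Hlt).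
rewrite !index_lex.
move: Hle Nbc; rewrite /idx_le /= xpair_eqE => /andP [H1 H2] N.
have Hj := ltn_ord j; have Hl := ltn_ord l.
have : (i : nat) != k \/ (j : nat) != l.
  by case/nandP: N => [N|N]; [left|right].
case => /eqP N'; nia.
Qed.
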